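(* Let $\Delta:A\to A$ be a weak-2-local derivation on a unital C$^*$-algebra $A$. Then for each projection $p\in A$, each $a\in A$ and each $\lambda\in\mathbb{C}$, $\Delta(a+\lambda p)=\Delta(a-\lambda(1-p))$.
   Context: A derivation on $A$ is a linear map $D:A\to A$ with $D(ab)=D(a)b+aD(b)$. A (not necessarily linear) map $\Delta:A\to A$ is a weak-2-local derivation if for every $a,b\in A$ and every $\phi\in A^*$ there exists a derivation $D_{a,b,\phi}:A\to A$ such that $\phi\Delta(a)=\phi D_{a,b,\phi}(a)$ and $\phi\Delta(b)=\phi D_{a,b,\phi}(b)$. *)

(* Defs.v *)
From HB Require Import structures.
From mathcomp Require Import all_boot all_order all_algebra.
From mathcomp Require Import complex.
From mathcomp Require Import reals.
Set Implicit Arguments. Unset Strict Implicit. Unset Printing Implicit Defensive.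
Import Order.TTheory GRing.Theory Num.Theory.
Local Open Scope ring_scope.

Definition cmod (R : rcfType) (c : R[i]) : R := ComplexField.Normc.normc c.

Definition is_unital_Cstar (R : rcfType) (A : algType R[i])
    (star : A -> A) (nrm : A -> R) : Prop :=
  [/\ (forall a, star (star a) = a),
      (forall a b, star (a + b) = star a + star b),
      (forall (c : R[i]) a, star (c *: a) = conjc c *: star a)
    & (forall a b, star (a * b) = star b * star a)] /\
  [/\ (forall a, 0 <= nrm a),
      (forall a, nrm a = 0 -> a = 0),
      (forall a b, nrm (a + b) <= nrm a + nrm b),
      (forall (c : R[i]) a, nrm (c *: a) = cmod c * nrm a)
    & (forall a b, nrm (a * b) <= nrm a * nrm b)] /\
  (forall u : nat -> A,
      (forall e : R, 0 < e -> exists N : nat, forall m n : nat,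
          (N <= m)%N -> (N <= n)%N -> nrm (u m - u n) < e) ->
      exists l : A, forall e : R, 0 < e -> exists N : nat, forall n : nat,
          (N <= n)%N -> nrm (u n - l) < e) /\
  (forall a, nrm (star a * a) = nrm a ^+ 2).

Definition is_projection (R : rcfType) (A : algType R[i]) (star : A -> A)
    (p : A) : Prop := p * p = p /\ star p = p.

Definition is_derivation (R : rcfType) (A : algType R[i]) (D : A -> A) : Prop :=
  [/\ (forall a b, D (a + b) = D a + D b),
      (forall (c : R[i]) a, D (c *: a) = c *: D a)
    & (forall a b, D (a * b) = D a * b + a * D b)].

Definition in_dual (R : rcfType) (A : algType R[i]) (nrm : A -> R)
    (phi : A -> R[i]) : Prop :=
  [/\ (forall a b, phi (a + b) = phi a + phi b),
      (forall (c : R[i]) a, phi (c *: a) = c * phi a)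
    & exists M : R, forall a, cmod (phi a) <= M * nrm a].

Definition weak_2_local_derivation (R : rcfType) (A : algType R[i])
    (nrm : A -> R) (Delta : A -> A) : Prop :=
  forall (a b : A) (phi : A -> R[i]), in_dual nrm phi ->
    exists D : A -> A, [/\ is_derivation D,
      phi (Delta a) = phi (D a) & phi (Delta b) = phi (D b)].

(* Main.v *)
Require Import Defs.
From HB Require Import structures.
From mathcomp Require Import all_boot all_order all_algebra.
From mathcomp Require Import complex.
From mathcomp Require Import reals.
From mathcomp Require Import boolp classical_sets.
From mathcomp Require Import ring lra.
Import Order.TTheory GRing.Theory Num.Theory.
Local Open Scope ring_scope.
Local Open Scope classical_set_scope.

Definition HBgr (R : realType) (V : lmodType R[i]) (p : V -> R) (z : V)
   (G : set (V * R)) : Prop :=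
 [/\ forall x r s, G (x,r) -> G (x,s) -> r = s,
     forall x y r s, G (x,r) -> G (y,s) -> G (x+y, r+s),
     forall (t : R) x r, G (x,r) -> G ((t%:C)%C *: x, t*r),
     forall x r, G (x,r) -> r <= p x
   & forall x r, G (x,r) -> G (z, p z)].
Arguments HBgr {R V}.

Lemma HBgr_chain (R : realType) (V : lmodType R[i]) (p : V -> R) (z : V)
  (F : set (set (V * R))) : F `<=` HBgr p z -> total_on F subset ->
  HBgr p z (\bigcup_(X in F) X).
Proof.
move=> FP tot.
have both : forall u v, (\bigcup_(X in F) X) u -> (\bigcup_(X in F) X) v ->
   exists2 X, F X & X u /\ X v.
  move=> u v [X FX Xu] [Y FY Yv].
  case: (tot X Y FX FY) => [XY|YX].
  - by exists Y => //; split => //; exact: XY.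
  - by exists X => //; split => //; exact: YX.
split.
- move=> x r s Hr Hs; have [X FX [Xr Xs]] := both _ _ Hr Hs.
  by have [H _ _ _ _] := FP X FX; exact: H Xr Xs.
- move=> x y r s Hr Hs; have [X FX [Xr Xs]] := both _ _ Hr Hs.
  have [_ H _ _ _] := FP X FX; exists X => //; exact: H Xr Xs.
- move=> t x r [X FX Xr]; have [_ _ H _ _] := FP X FX; exists X => //; exact: H.
- move=> x r [X FX Xr]; have [_ _ _ H _] := FP X FX; exact: H Xr.
- move=> x r [X FX Xr]; have [_ _ _ _ H] := FP X FX; exists X => //; exact: H Xr.
Qed.


Lemma scale_inv (R : realType) (V : lmodType R[i]) (t : R) (x : V) :
  t != 0 -> ((t%:C)%C *: (((t^-1)%:C)%C *: x)) = x.
Proof. by move=> t0; rewrite scalerA -rmorphM mulfV // rmorph1 scale1r. Qed.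

Lemma HB_ext (R : realType) (V : lmodType R[i]) (p : V -> R)
 (pD : forall x y, p (x+y) <= p x + p y)
 (pZ : forall (t:R) x, p ((t%:C)%C *: x) = `|t| * p x) (z : V)
 (G : set (V * R)) : HBgr p z G -> G (0,0) -> forall x0, ~ (exists r, G (x0,r)) ->
 exists B, HBgr p z B /\ G `<` B.
Proof.
move=> [Gf Ga Gs Gb Gz] G00 x0 nx0.
pose E := [set v : R | exists y r, G (y,r) /\ v = r - p (y - x0)].
have key : forall y r y' r', G (y,r) -> G (y',r') -> r - p (y - x0) <= p (y'+x0) - r'.
  move=> y r y' r' H H'; have := Gb _ _ (Ga _ _ _ _ H H').
  have := pD (y - x0) (y' + x0).
  rewrite addrACA addNr addr0; lra.
have E0 : E !=set0 by exists (0 - p (0 - x0)), 0, 0.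
have Eub : ubound E (p (0 + x0) - 0).
  by move=> v [y [r [Gyr ->]]]; exact: key.
have hsE : has_sup E by split => //; exists (p (0 + x0) - 0).
set c := sup E.
have c_ge : forall y r, G (y,r) -> r - p (y - x0) <= c.
  by move=> y r Gyr; apply: sup_upper_bound => //; exists y, r.
have c_le : forall y r, G (y,r) -> c <= p (y + x0) - r.
  move=> y r Gyr; apply: ge_sup => // v [y' [r' [Gyr' ->]]]; exact: key.
have Gneg : forall y r, G (y,r) -> G (-y, -r).
  by move=> y r /(Gs (-1)); rewrite rmorphN1 scaleN1r mulN1r.
pose B := [set u | exists y r (t : R), G (y,r) /\ u = (y + (t%:C)%C *: x0, r + t * c)].
exists B; split; last first.
  split.
    move=> [x r] Gxr; exists x, r, 0; split => //.
    by rewrite rmorph0 scale0r addr0 mul0r addr0.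
  move=> BG; apply: nx0; exists c.
  have : B (x0, c).
    by exists 0, 0, 1; split => //; rewrite rmorph1 scale1r add0r mul1r add0r.
  exact: BG.
split.
- move=> x r s [y1 [r1 [t1 [G1 []]]]] -> -> [y2 [r2 [t2 [G2 []]]]] e ->.
  have [t12|t12] := eqVneq t1 t2.
    subst t2; move/addIr: e => e; subst y2.
    by rewrite (Gf _ _ _ G1 G2).
  exfalso; apply: nx0.
  have d0 : t1 - t2 != 0 by rewrite subr_eq0.
  have ex : x0 = (((t1 - t2)^-1)%:C)%C *: (y2 - y1).
    apply: (@scalerI _ _ ((t1 - t2)%:C)%C).
      by rewrite -(rmorph0 (real_complex R)); apply: contra d0 => /eqP [] ->.
    rewrite scale_inv // rmorphB scalerBl.
    have -> : y1 = y2 + (t2%:C)%C *: x0 - (t1%:C)%C *: x0 by rewrite -e addrK.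
    by rewrite opprB addrCA opprD addNKr.
  exists ((t1 - t2)^-1 * (r2 - r1)); rewrite ex; apply: Gs.
  by apply: Ga => //; exact: Gneg.
- move=> x y r s [y1 [r1 [t1 [G1 [-> ->]]]]] [y2 [r2 [t2 [G2 [-> ->]]]]].
  exists (y1 + y2), (r1 + r2), (t1 + t2); split; first exact: Ga.
  by rewrite rmorphD scalerDl mulrDl; congr (_, _); rewrite addrACA.
- move=> t x r [y1 [r1 [t1 [G1 [-> ->]]]]].
  exists ((t%:C)%C *: y1), (t * r1), (t * t1); split; first exact: Gs.
  by rewrite scalerDr scalerA -rmorphM mulrDr mulrA.
- move=> x r [y [r1 [t [G1 [-> ->]]]]].
  case: (ltrgt0P t) => [tpos|tneg|->]; last first.
  + by rewrite rmorph0 scale0r addr0 mul0r addr0; exact: Gb.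
  + have t0 : -t != 0 by rewrite oppr_eq0 lt_eqF.
    have := c_ge _ _ (Gs (-t)^-1 _ _ G1).
    have -> : y + (t%:C)%C *: x0 = ((-t)%:C)%C *: (((-t)^-1%:C)%C *: y - x0).
      by rewrite scalerBr scale_inv // rmorphN scaleNr opprK.
    have tn : 0 < -t by rewrite oppr_gt0.
    rewrite pZ gtr0_norm // => h.
    have := ler_wpM2l (ltW tn) h.
    by rewrite mulrBr mulrA mulfV // mul1r; lra.
  + have t0 : t != 0 by rewrite gt_eqF.
    have := c_le _ _ (Gs t^-1 _ _ G1).
    have -> : y + (t%:C)%C *: x0 = (t%:C)%C *: (((t^-1)%:C)%C *: y + x0).
      by rewrite scalerDr scale_inv.
    rewrite pZ gtr0_norm // => h.
    have := ler_wpM2l (ltW tpos) h.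
    by rewrite mulrBr mulrA mulfV // mul1r; lra.
- move=> x r [y [r1 [t [G1 _]]]].
  exists z, (p z), 0; split; first exact: Gz G1.
  by rewrite rmorph0 scale0r addr0 mul0r addr0.
Qed.

Lemma hahn_banach_real (R : realType) (V : lmodType R[i]) (p : V -> R)
 (p0 : forall x, 0 <= p x)
 (pD : forall x y, p (x+y) <= p x + p y)
 (pZ : forall (t:R) x, p ((t%:C)%C *: x) = `|t| * p x) (z : V) :
 exists g : V -> R, [/\ forall x y, g (x+y) = g x + g y,
   forall (t:R) x, g ((t%:C)%C *: x) = t * g x,
   forall x, g x <= p x & g z = p z].
Proof.
have [G [PG Gmax]] := Zorn_bigcup (@HBgr_chain _ _ p z).
have p00 : p 0 = 0 by have := pZ 0 0; rewrite rmorph0 scale0r normr0 mul0r.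
have Gne : exists u, G u.
  case: (pselect (exists u, G u)) => // nG; exfalso.
  pose B0 := [set u | exists t : R, u = ((t%:C)%C *: z, t * p z)].
  apply: (Gmax B0).
    split; first by move=> u Gu; exfalso; apply: nG; exists u.
    move=> h; apply: nG; exists (z, p z); apply: h; exists 1.
    by rewrite rmorph1 scale1r mul1r.
  split.
  - move=> x r s [t1 [-> ->]] [t2 [e ->]].
    have [->|ne] := eqVneq t1 t2 => //.
    have z0 : z = 0.
      apply: (@scalerI _ _ ((t1 - t2)%:C)%C).
        by rewrite -(rmorph0 (real_complex R)); apply: contra ne => /eqP [] /eqP; rewrite subr_eq0.
      by rewrite scaler0 rmorphB scalerBl e subrr.
    by rewrite z0 p00 !mulr0.
  - move=> x y r s [t1 [-> ->]] [t2 [-> ->]]; exists (t1 + t2).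
    by rewrite rmorphD scalerDl mulrDl.
  - move=> t x r [t1 [-> ->]]; exists (t * t1).
    by rewrite rmorphM scalerA mulrA.
  - move=> x r [t [-> ->]]; rewrite pZ; apply: ler_wpM2r; [exact: p0|exact: ler_norm].
  - by move=> x r _; exists 1; rewrite rmorph1 scale1r mul1r.
have [Gf Ga Gs Gb Gz] := PG.
have Gzz : G (z, p z) by case: Gne => [[x r]] /Gz.
have G00 : G (0, 0) by have := Gs 0 _ _ Gzz; rewrite rmorph0 scale0r mul0r.
have dom : forall x, exists r, G (x, r).
  move=> x; case: (pselect (exists r, G (x,r))) => // nx.
  have [B [PB GB]] := @HB_ext _ _ p pD pZ z G PG G00 x nx.
  by case: (Gmax B GB PB).
pose g x := proj1_sig (cid (dom x)).
have gG : forall x, G (x, g x) := fun x => proj2_sig (cid (dom x)).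
exists g; split.
- by move=> x y; apply: Gf (gG _) (Ga _ _ _ _ (gG x) (gG y)).
- by move=> t x; apply: Gf (gG _) (Gs t _ _ (gG x)).
- by move=> x; exact: Gb (gG x).
- exact: Gf (gG z) Gzz.
Qed.

Lemma Cext (R : rcfType) (x y : R[i]) :
  complex.Re x = complex.Re y -> complex.Im x = complex.Im y -> x = y.
Proof. by case: x => a b; case: y => c d /= -> ->. Qed.

Lemma cmod_real (R : rcfType) (t : R) : cmod ((t%:C)%C) = `|t|.
Proof. by rewrite /cmod /= expr0n /= addr0 sqrtr_sqr. Qed.

Lemma cmod_i (R : rcfType) : cmod ('i%C : R[i]) = 1.
Proof. by rewrite /cmod /= expr0n /= expr1n add0r sqrtr1. Qed.

Lemma sep_functional (R : realType) (A : algType R[i]) (nrm : A -> R)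
  (n0 : forall a, 0 <= nrm a)
  (nD : forall a b, nrm (a + b) <= nrm a + nrm b)
  (nZ : forall (c : R[i]) a, nrm (c *: a) = cmod c * nrm a)
  (w : A) : 0 < nrm w -> exists phi, in_dual nrm phi /\ phi w != 0.
Proof.
move=> nw.
have pZ : forall (t : R) x, nrm ((t%:C)%C *: x) = `|t| * nrm x.
  by move=> t x; rewrite nZ cmod_real.
have [g [gD gZ gb gw]] := @hahn_banach_real _ _ nrm n0 nD pZ w.
have gabs : forall x, `|g x| <= nrm x.
  move=> x; have := gb (- x); rewrite -scaleN1r -(rmorphN1 (real_complex R)) gZ pZ.
  rewrite normrN1 mul1r mulN1r => h; have := gb x.
  rewrite ler_norml; lra.
have gi : forall x, `|g ('i%C *: x)| <= nrm x.
  by move=> x; have := gabs ('i%C *: x); rewrite nZ cmod_i mul1r.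
have gc : forall (a b : R) x, g ((a +i* b)%C *: x) = a * g x + b * g ('i%C *: x).
  move=> a b x.
  have -> : ((a +i* b)%C : R[i]) = (a%:C)%C + (b%:C)%C * 'i%C.
    by apply: Cext => /=; ring.
  by rewrite scalerDl -scalerA gD !gZ.
pose phi x := ((g x)%:C - 'i * (g ('i *: x))%:C)%C.
exists phi; split; last first.
  apply/negP => /eqP /(f_equal (@complex.Re R)) /=.
  rewrite gw; lra.
split.
- move=> x y; rewrite /phi scalerDr !gD !rmorphD mulrDr.
  by rewrite opprD addrACA.
- move=> [a b] x; rewrite /phi (gc a b x) scalerA.
  have -> : ('i%C * (a +i* b)%C : R[i]) = ((-b) +i* a)%C.
    by apply: Cext => /=; ring.
  rewrite (gc (-b) a x); apply: Cext => /=; ring.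
- exists 2 => x; rewrite /phi /cmod /=.
  set u := g x; set v := g ('i%C *: x).
  have hu := gabs x; have hv := gi x.
  rewrite -/u in hu; rewrite -/v in hv.
  have n0x := n0 x.
  have -> : 2 * nrm x = Num.sqrt ((2 * nrm x) ^+ 2) by rewrite sqrtr_sqr ger0_norm //; lra.
  rewrite ler_sqrt; last by rewrite sqr_ge0.
  move: hu hv; rewrite !ler_norml => /andP[h1 h2] /andP[h3 h4].
  nra.
Qed.

Lemma derivation1 (R : rcfType) (A : algType R[i]) (D : A -> A) :
  is_derivation D -> D 1 = 0.
Proof.
move=> [DD DZ DM]; have := DM 1 1; rewrite !mul1r !mulr1 => h.
by apply: (@addrI _ (D 1)); rewrite addr0 -h.
Qed.

Theorem lemma2p3 (R : realType) (A : algType R[i]) (star : A -> A)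
    (nrm : A -> R) (HA : is_unital_Cstar star nrm) (Delta : A -> A)
    (HDelta : weak_2_local_derivation nrm Delta)
    (p : A) (Hp : is_projection star p) (a : A) (lambda : R[i]) :
  Delta (a + lambda *: p) = Delta (a - lambda *: (1 - p)).
Proof.
have [_ [[n0 n_eq0 nD nZ _] _]] := HA.
set x := a + lambda *: p; set y := a - lambda *: (1 - p).
have xy : x = y + lambda *: 1.
  by rewrite /x /y scalerBr opprB -addrA subrK.
apply/eqP; rewrite -subr_eq0; apply/negP => /negP hw.
have nw : 0 < nrm (Delta x - Delta y).
  rewrite lt_def n0 andbT; apply: contra hw => /eqP /n_eq0 ->; by [].
have [phi [[phD phZ phB] phw]] := @sep_functional _ _ nrm n0 nD nZ _ nw.
have [D [HD ex ey]] := HDelta x y phi (And3 phD phZ phB).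
have Dxy : D x = D y.
  have [DD DZ _] := HD; by rewrite xy DD DZ (@derivation1 _ _ D HD) scaler0 addr0.
move: phw; have -> : phi (Delta x - Delta y) = phi (Delta x) - phi (Delta y).
  have phN : forall u, phi (- u) = - phi u.
    by move=> u; rewrite -scaleN1r phZ mulN1r.
  by rewrite phD phN.
by rewrite ex ey Dxy subrr eqxx.
Qed.
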